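(* Let $\mathcal{A}$ be a u-MPS core tensor and $R$ a (possibly ambiguous) regex such that the generalized right transfer operator $\mathcal{E}^r_R$ converges. Let $Q_\ell,Q_r\in\mathbb{R}^{D\times D}$ be positive semidefinite with $\mathcal{Z}_R(Q_\ell,Q_r)>0$ (and assume all normalization constants encountered by the algorithm are positive). Then the random string output by $\mathrm{SAMPLE}(R,Q_\ell,Q_r)$ has distribution $$P_R(s,Q_\ell,Q_r)=|s|_R\,\frac{\tilde P(s,Q_\ell,Q_r)}{\mathcal{Z}_R(Q_\ell,Q_r)},\qquad s\in\Sigma^*,$$ where $\tilde P(s,Q_\ell,Q_r)=\mathrm{Tr}(Q_\ell\,\mathcal{E}^r_s(Q_r))=\mathrm{Tr}(Q_\ell\mathcal{A}(s)Q_r\mathcal{A}(s)^T)$ and $\mathcal{Z}_R(Q_\ell,Q_r)=\mathrm{Tr}(Q_\ell\,\mathcal{E}^r_R(Q_r))$.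
   Context: A u-MPS core tensor $\mathcal{A}$ of shape $(D,d,D)$ over a finite alphabet $\Sigma$ of size $d$ assigns to each $c\in\Sigma$ a matrix $\mathcal{A}(c)\in\mathbb{R}^{D\times D}$; for $s=s_1\cdots s_n$, $\mathcal{A}(s)=\mathcal{A}(s_1)\cdots\mathcal{A}(s_n)$, $\mathcal{A}(\varepsilon)=I$. Regex are syntax trees built from characters $c\in\Sigma$, concatenations $R_1R_2$, unions $R_1|R_2$, Kleene closures $S^*$. Match counts: $|s|_c=1$ if $s=c$, else $0$; $|s|_{R_1R_2}=\sum_{s_1s_2=s}|s_1|_{R_1}|s_2|_{R_2}$; $|s|_{R_1|R_2}=|s|_{R_1}+|s|_{R_2}$; $|s|_{S^*}=\sum_{n\ge0}\sum_{s_1\cdots s_n=s}\prod_i|s_i|_S$ (the $n=0$ term being $1$ iff $s=\varepsilon$). Generalized transfer operators: $\mathcal{E}^r_c(Q)=\mathcal{A}(c)Q\mathcal{A}(c)^T$, $\mathcal{E}^\ell_c(Q)=\mathcal{A}(c)^TQ\mathcal{A}(c)$; $\mathcal{E}^r_{R_1R_2}=\mathcal{E}^r_{R_1}\circ\mathcal{E}^r_{R_2}$, $\mathcal{E}^\ell_{R_1R_2}=\mathcal{E}^\ell_{R_2}\circ\mathcal{E}^\ell_{R_1}$; unions give sums; $\mathcal{E}^r_{S^*}=\sum_{n\ge0}(\mathcal{E}^r_S)^{\circ n}$, $\mathcal{E}^\ell_{S^*}=\sum_{n\ge0}(\mathcal{E}^\ell_S)^{\circ n}$. A literal string $s$ is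 treated as the concatenation of its characters, so $\mathcal{E}^r_s(Q)=\mathcal{A}(s)Q\mathcal{A}(s)^T$, $\mathcal{E}^\ell_s(Q)=\mathcal{A}(s)^TQ\mathcal{A}(s)$. $\mathcal{E}^r_R$ converges if all Kleene-closure series in its recursive definition converge. Define $\mathcal{Z}_R(Q_\ell,Q_r)=\mathrm{Tr}(Q_\ell\mathcal{E}^r_R(Q_r))$. The randomized procedure $\mathrm{SAMPLE}(R,Q_\ell,Q_r)$ is defined recursively: (i) if $R=c$, return $c$; (ii) if $R=R_1R_2$, let $s_1=\mathrm{SAMPLE}(R_1,Q_\ell,\mathcal{E}^r_{R_2}(Q_r))$, then $s_2=\mathrm{SAMPLE}(R_2,\mathcal{E}^\ell_{s_1}(Q_\ell),Q_r)$, and return $s_1s_2$; (iii) if $R=R_1|R_2$, choose $i\in\{1,2\}$ with probability $\mathcal{Z}_{R_i}(Q_\ell,Q_r)/\mathcal{Z}_{R_1|R_2}(Q_\ell,Q_r)$ and return $\mathrm{SAMPLE}(R_i,Q_\ell,Q_r)$; (iv) if $R=S^*$, with probability $p_{\mathrm{HALT}}=\mathrm{Tr}(Q_\ell Q_r)/\mathcal{Z}_{S^*}(Q_\ell,Q_r)$ return the empty string $\varepsilon$, and otherwise (probability $1-p_{\mathrm{HALT}}$) return $\mathrm{SAMPLE}(SS^*,Q_\ell,Q_r)$, where $SS^*$ is the concatenation of $S$ with $S^*$. All random choices are independent. *)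

(* Defs.v *)
From Stdlib Require Import Reals List Relations ClassicalEpsilon.
From Stdlib Require Fin.
Import ListNotations.
Open Scope R_scope.

(** * Real D x D matrices, represented as functions (only indices < D matter) *)
Definition Mat := nat -> nat -> R.

Fixpoint rsum (n : nat) (f : nat -> R) : R :=
  match n with O => 0 | S k => rsum k f + f k end.

Definition mmul (D : nat) (X Y : Mat) : Mat :=
  fun i j => rsum D (fun k => X i k * Y k j).
Definition madd (X Y : Mat) : Mat := fun i j => X i j + Y i j.
Definition mid : Mat := fun i j => if Nat.eq_dec i j then 1 else 0.
Definition mtr (X : Mat) : Mat := fun i j => X j i.
Definition mtrace (D : nat) (X : Mat) : R := rsum D (fun i => X i i).

Definition PSD (D : nat) (Q : Mat) : Prop :=
  (forall i j, (i < D)%nat -> (j < D)%nat -> Q i j = Q j i) /\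
  (forall x : nat -> R,
      0 <= rsum D (fun i => rsum D (fun j => x i * Q i j * x j))).

(** limit of a real sequence (meaningful when it converges) *)
Definition lim (u : nat -> R) : R := epsilon (inhabits 0) (fun l => Un_cv u l).
Definition mlim (u : nat -> Mat) : Mat := fun i j => lim (fun N => u N i j).

Definition word (d : nat) := list (Fin.t d).

Inductive regex (d : nat) : Type :=
| Chr  : Fin.t d -> regex d
| Cat  : regex d -> regex d -> regex d
| Alt  : regex d -> regex d -> regex d
| Star : regex d -> regex d.
Arguments Chr {d}. Arguments Cat {d}. Arguments Alt {d}. Arguments Star {d}.

Definition is_single {d} (c : Fin.t d) (s : word d) : R :=
  match s with [c'] => if Fin.eq_dec c c' then 1 else 0 | _ => 0 end.

Definition splits {T} (s : list T) : list (list T * list T) :=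
  map (fun k => (firstn k s, skipn k s)) (seq 0 (S (length s))).
Definition lsum {T} (f : T -> R) (l : list T) : R :=
  fold_right (fun x acc => f x + acc) 0 l.

(** sum over s1 ... sn = s of prod_i f(s_i)  (n = 0: [s = eps]) *)
Fixpoint star_pow {d} (f : word d -> R) (n : nat) (s : word d) : R :=
  match n with
  | O => match s with [] => 1 | _ => 0 end
  | S k => lsum (fun p => f (fst p) * star_pow f k (snd p)) (splits s)
  end.

Fixpoint count {d} (e : regex d) (s : word d) : R :=
  match e with
  | Chr c => is_single c s
  | Cat e1 e2 => lsum (fun p => count e1 (fst p) * count e2 (snd p)) (splits s)
  | Alt e1 e2 => count e1 s + count e2 s
  | Star e1 => lim (fun N => rsum (S N) (fun n => star_pow (count e1) n s))
  end.

Definition Aword (D : nat) {d} (A : Fin.t d -> Mat) (s : word d) : Mat :=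
  fold_right (fun c M => mmul D (A c) M) mid s.

Fixpoint iter_op (T : Mat -> Mat) (n : nat) (Q : Mat) : Mat :=
  match n with O => Q | S k => T (iter_op T k Q) end.
Fixpoint psum_op (T : Mat -> Mat) (N : nat) (Q : Mat) : Mat :=
  match N with O => Q | S k => madd (psum_op T k Q) (iter_op T (S k) Q) end.

Fixpoint Er (D : nat) {d} (A : Fin.t d -> Mat) (e : regex d) : Mat -> Mat :=
  match e with
  | Chr c => fun Q => mmul D (mmul D (A c) Q) (mtr (A c))
  | Cat e1 e2 => fun Q => Er D A e1 (Er D A e2 Q)
  | Alt e1 e2 => fun Q => madd (Er D A e1 Q) (Er D A e2 Q)
  | Star e1 => fun Q => mlim (fun N => psum_op (Er D A e1) N Q)
  end.

Definition El_word (D : nat) {d} (A : Fin.t d -> Mat) (s : word d) (Q : Mat) : Mat :=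
  mmul D (mmul D (mtr (Aword D A s)) Q) (Aword D A s).

(** E^r_R converges: every Kleene-closure series converges (entrywise, for every Q) *)
Fixpoint Conv (D : nat) {d} (A : Fin.t d -> Mat) (e : regex d) : Prop :=
  match e with
  | Chr _ => True
  | Cat e1 e2 => Conv D A e1 /\ Conv D A e2
  | Alt e1 e2 => Conv D A e1 /\ Conv D A e2
  | Star e1 => Conv D A e1 /\
      forall (Q : Mat) (i j : nat), (i < D)%nat -> (j < D)%nat ->
        exists l, Un_cv (fun N => psum_op (Er D A e1) N Q i j) l
  end.

Definition ZR (D : nat) {d} (A : Fin.t d -> Mat) (e : regex d) (Ql Qr : Mat) : R :=
  mtrace D (mmul D Ql (Er D A e Qr)).

Definition Ptilde (D : nat) {d} (A : Fin.t d -> Mat) (s : word d) (Ql Qr : Mat) : R :=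
  mtrace D (mmul D Ql (mmul D (mmul D (Aword D A s) Qr) (mtr (Aword D A s)))).

(** * Output distribution of SAMPLE.
    [psamp n e Ql Qr s] = probability that SAMPLE(e,Ql,Qr) halts with output s
    using recursion depth at most n.  The probability that SAMPLE outputs s is
    the (monotone) limit as n -> infinity. *)
Fixpoint psamp (D : nat) {d} (A : Fin.t d -> Mat) (n : nat) (e : regex d)
         (Ql Qr : Mat) (s : word d) {struct n} : R :=
  match n with
  | O => 0
  | S n' =>
    match e with
    | Chr c => is_single c s
    | Cat e1 e2 =>
        lsum (fun p => psamp D A n' e1 Ql (Er D A e2 Qr) (fst p)
                       * psamp D A n' e2 (El_word D A (fst p) Ql) Qr (snd p))
             (splits s)
    | Alt e1 e2 =>
        ZR D A e1 Ql Qr / ZR D A (Alt e1 e2) Ql Qr * psamp D A n' e1 Ql Qr s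
      + ZR D A e2 Ql Qr / ZR D A (Alt e1 e2) Ql Qr * psamp D A n' e2 Ql Qr s
    | Star e1 =>
        let pH := mtrace D (mmul D Ql Qr) / ZR D A (Star e1) Ql Qr in
        (match s with [] => pH | _ => 0 end)
        + (1 - pH) * psamp D A n' (Cat e1 (Star e1)) Ql Qr s
    end
  end.

(** * Recursive calls SAMPLE(e,Ql,Qr) can make (control flow) *)
Definition call (d : nat) := (regex d * Mat * Mat)%type.

Inductive step (D : nat) {d} (A : Fin.t d -> Mat) : call d -> call d -> Prop :=
| step_cat1 e1 e2 Ql Qr :
    step D A (Cat e1 e2, Ql, Qr) (e1, Ql, Er D A e2 Qr)
| step_cat2 e1 e2 Ql Qr (s1 : word d) :
    count e1 s1 <> 0 ->
    step D A (Cat e1 e2, Ql, Qr) (e2, El_word D A s1 Ql, Qr)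
| step_alt1 e1 e2 Ql Qr : step D A (Alt e1 e2, Ql, Qr) (e1, Ql, Qr)
| step_alt2 e1 e2 Ql Qr : step D A (Alt e1 e2, Ql, Qr) (e2, Ql, Qr)
| step_star e1 Ql Qr : step D A (Star e1, Ql, Qr) (Cat e1 (Star e1), Ql, Qr).

Definition norm_pos (D : nat) {d} (A : Fin.t d -> Mat) (c : call d) : Prop :=
  match c with
  | (Alt e1 e2, Ql, Qr) => 0 < ZR D A (Alt e1 e2) Ql Qr
  | (Star e1, Ql, Qr) => 0 < ZR D A (Star e1) Ql Qr
  | _ => True
  end.

(* Main.v *)
Require Import Defs.
From Stdlib Require Import Reals List Relations.
From Stdlib Require Import Lra Lia FunctionalExtensionality ClassicalEpsilon.
Import ListNotations.
Open Scope R_scope.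


Lemma rsum_ext n f g : (forall k, (k < n)%nat -> f k = g k) -> rsum n f = rsum n g.
Proof. induction n; simpl; intros H; auto. rewrite IHn by (intros; apply H; lia). rewrite H by lia. auto. Qed.
Lemma rsum_plus n f g : rsum n (fun k => f k + g k) = rsum n f + rsum n g.
Proof. induction n; simpl; [lra|rewrite IHn; lra]. Qed.
Lemma rsum_scal_l n c f : rsum n (fun k => c * f k) = c * rsum n f.
Proof. induction n; simpl; [lra|rewrite IHn; lra]. Qed.
Lemma rsum_scal_r n c f : rsum n (fun k => f k * c) = rsum n f * c.
Proof. induction n; simpl; [lra|rewrite IHn; lra]. Qed.
Lemma rsum_zero n : rsum n (fun _ => 0) = 0.
Proof. induction n; simpl; [lra|rewrite IHn; lra]. Qed.
Lemma rsum_zero' n f : (forall k, (k < n)%nat -> f k = 0) -> rsum n f = 0.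
Proof. intros H; rewrite (rsum_ext n f (fun _ => 0)) by auto; apply rsum_zero. Qed.
Lemma rsum_swap n m f : rsum n (fun i => rsum m (fun j => f i j)) = rsum m (fun j => rsum n (fun i => f i j)).
Proof. induction n; simpl. - symmetry; apply rsum_zero.
  - rewrite IHn. rewrite <- rsum_plus. auto. Qed.
Lemma rsum_nonneg n f : (forall k, (k < n)%nat -> 0 <= f k) -> 0 <= rsum n f.
Proof. induction n; simpl; intros H; [lra|]. pose proof (H n ltac:(lia)). pose proof (IHn ltac:(intros; apply H; lia)). lra. Qed.
Lemma rsum_le n f g : (forall k, (k < n)%nat -> f k <= g k) -> rsum n f <= rsum n g.
Proof. induction n; simpl; intros H; [lra|]. pose proof (H n ltac:(lia)). pose proof (IHn ltac:(intros; apply H; lia)). lra. Qed.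
Lemma rsum_delta n a f : (a < n)%nat -> rsum n (fun k => (if Nat.eq_dec a k then 1 else 0) * f k) = f a.
Proof. induction n; intros Ha; [lia|]. simpl. destruct (Nat.eq_dec a n).
  - subst. rewrite rsum_zero'. lra. intros k Hk. destruct (Nat.eq_dec n k); [lia|lra].
  - rewrite IHn by lia. lra. Qed.
Lemma rsum_delta' n a f : (a < n)%nat -> rsum n (fun k => f k * (if Nat.eq_dec k a then 1 else 0)) = f a.
Proof. intros H. rewrite <- (rsum_delta n a f H). apply rsum_ext. intros k _.
  destruct (Nat.eq_dec a k), (Nat.eq_dec k a); try lia; lra. Qed.
Lemma rsum_shift n f : rsum (S n) f = f 0%nat + rsum n (fun k => f (S k)).
Proof. induction n. simpl; lra. change (rsum (S (S n)) f) with (rsum (S n) f + f (S n)). rewrite IHn. simpl. lra. Qed.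

Lemma lim_cv u l : Un_cv u l -> lim u = l.
Proof. intros H. unfold lim. apply (UL_sequence u). 2: exact H.
  apply (epsilon_spec (inhabits 0) (fun l => Un_cv u l)). eauto. Qed.
Lemma cv_const c : Un_cv (fun _ => c) c.
Proof. intros e He. exists 0%nat. intros. unfold Rdist. rewrite Rminus_diag, Rabs_R0. lra. Qed.
Lemma cv_ev u c : (exists N, forall n, (n >= N)%nat -> u n = c) -> Un_cv u c.
Proof. intros [N HN] e He. exists N. intros n Hn. rewrite HN by auto. unfold Rdist. rewrite Rminus_diag, Rabs_R0. lra. Qed.
Lemma cv_ext u v l : (forall n, u n = v n) -> Un_cv u l -> Un_cv v l.
Proof. intros H. replace v with u; auto. extensionality n; auto. Qed.
Lemma cv_shift u l : Un_cv (fun n => u (S n)) l -> Un_cv u l.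
Proof. intros H e He. destruct (H e He) as [N HN]. exists (S N). intros n Hn.
  destruct n; [lia|]. apply HN. lia. Qed.
Lemma cv_shift_inv u l : Un_cv u l -> Un_cv (fun n => u (S n)) l.
Proof. intros H e He. destruct (H e He) as [N HN]. exists N. intros n Hn. apply HN. lia. Qed.
Lemma cv_rsum m (f : nat -> nat -> R) g : (forall k, (k < m)%nat -> Un_cv (fun N => f N k) (g k)) ->
  Un_cv (fun N => rsum m (f N)) (rsum m g).
Proof. induction m; intros H; simpl. apply cv_const.
  apply CV_plus. apply IHm; intros; apply H; lia. apply H; lia. Qed.
Lemma cv_scal c u l : Un_cv u l -> Un_cv (fun n => c * u n) (c * l).
Proof. intros H. apply CV_mult; auto. apply cv_const. Qed.
Lemma cv_nonneg u l : (forall n, 0 <= u n) -> Un_cv u l -> 0 <= l.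
Proof. intros H Hc. destruct (Rlt_le_dec l 0) as [Hl|Hl]; auto.
  destruct (Hc (-l) ltac:(lra)) as [N HN]. specialize (HN N ltac:(lia)). specialize (H N).
  unfold Rdist in HN. rewrite Rabs_right in HN; lra. Qed.
Lemma cv_le u v l1 l2 : (forall n, u n <= v n) -> Un_cv u l1 -> Un_cv v l2 -> l1 <= l2.
Proof. intros H H1 H2. assert (0 <= l2 - l1). apply (cv_nonneg (fun n => v n - u n)).
  intros; specialize (H n); lra. apply CV_minus; auto. lra. Qed.
Lemma cv_bound u l : Un_cv u l -> exists N, forall n, (n >= N)%nat -> u n < l + 1.
Proof. intros H. destruct (H 1 ltac:(lra)) as [N HN]. exists N. intros n Hn. specialize (HN n Hn). unfold Rdist in HN. apply Rabs_def2 in HN. lra. Qed.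

Definition lsumT {T} := @lsum T.
Lemma lsum_ext_in {T} (f g : T -> R) l : (forall x, In x l -> f x = g x) -> lsum f l = lsum g l.
Proof. induction l; simpl; intros H; auto. rewrite H by auto. rewrite IHl; auto. Qed.
Lemma lsum_scal_r {T} (f : T -> R) c l : lsum (fun x => f x * c) l = lsum f l * c.
Proof. induction l; simpl; [lra|rewrite IHl; lra]. Qed.
Lemma lsum_nonneg {T} (f : T -> R) l : (forall x, In x l -> 0 <= f x) -> 0 <= lsum f l.
Proof. induction l; simpl; intros H; [lra|]. pose proof (H a (or_introl eq_refl)). pose proof (IHl ltac:(auto)). lra. Qed.
Lemma lsum_le {T} (f g : T -> R) l : (forall x, In x l -> f x <= g x) -> lsum f l <= lsum g l.
Proof. induction l; simpl; intros H; [lra|]. pose proof (H a (or_introl eq_refl)). pose proof (IHl ltac:(auto)). lra. Qed.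
Lemma lsum_zero {T} (f : T -> R) l : (forall x, In x l -> f x = 0) -> lsum f l = 0.
Proof. induction l; simpl; intros H; [lra|]. rewrite H, IHl by auto. lra. Qed.
Lemma cv_lsum {T} (f : nat -> T -> R) g l : (forall x, In x l -> Un_cv (fun N => f N x) (g x)) ->
  Un_cv (fun N => lsum (f N) l) (lsum g l).
Proof. induction l; simpl; intros H. apply cv_const. apply CV_plus; auto. Qed.
Lemma lsum_rsum {T} (f : nat -> T -> R) l n : lsum (fun x => rsum n (fun k => f k x)) l = rsum n (fun k => lsum (f k) l).
Proof. induction l; simpl. symmetry; apply rsum_zero. rewrite IHl, <- rsum_plus. auto. Qed.

Lemma splits_in {T} (s : list T) p : In p (splits s) -> fst p ++ snd p = s /\ (fst p = [] \/ (length (snd p) < length s)%nat) /\ (length (snd p) <= length s)%nat.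
Proof. unfold splits. rewrite in_map_iff. intros [k [<- Hk]]. simpl. rewrite firstn_skipn, length_skipn.
  split; auto. split; [|lia]. destruct k. left; auto. destruct s. left; auto. right; simpl; lia. Qed.
Lemma splits_nil {T} : splits (@nil T) = [([],[])].
Proof. reflexivity. Qed.


Definition meq (D : nat) (X Y : Mat) := forall i j, (i < D)%nat -> (j < D)%nat -> X i j = Y i j.
Definition mscal (c : R) (X : Mat) : Mat := fun i j => c * X i j.
Definition mzero : Mat := fun _ _ => 0.

Lemma meq_refl D X : meq D X X. Proof. red; auto. Qed.
Lemma meq_sym D X Y : meq D X Y -> meq D Y X. Proof. unfold meq; intros; symmetry; auto. Qed.
Lemma meq_trans D X Y Z : meq D X Y -> meq D Y Z -> meq D X Z.
Proof. unfold meq; intros; rewrite H; auto. Qed.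

Lemma mmul_assoc D X Y Z : mmul D (mmul D X Y) Z = mmul D X (mmul D Y Z).
Proof. extensionality i; extensionality j; unfold mmul.
  transitivity (rsum D (fun k => rsum D (fun l => X i l * Y l k * Z k j))).
  { apply rsum_ext; intros; rewrite <- rsum_scal_r; apply rsum_ext; intros; ring. }
  rewrite rsum_swap. apply rsum_ext; intros; rewrite <- rsum_scal_l; apply rsum_ext; intros; ring. Qed.
Lemma mtr_mmul D X Y : mtr (mmul D X Y) = mmul D (mtr Y) (mtr X).
Proof. extensionality i; extensionality j; unfold mtr, mmul. apply rsum_ext; intros; ring. Qed.
Lemma tr_comm D X Y : mtrace D (mmul D X Y) = mtrace D (mmul D Y X).
Proof. unfold mtrace, mmul. rewrite rsum_swap. apply rsum_ext; intros; apply rsum_ext; intros; ring. Qed.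
Lemma mmul_meq D X X' Y Y' : meq D X X' -> meq D Y Y' -> meq D (mmul D X Y) (mmul D X' Y').
Proof. unfold meq, mmul; intros. apply rsum_ext; intros. rewrite H, H0; auto. Qed.
Lemma mtr_meq D X Y : meq D X Y -> meq D (mtr X) (mtr Y).
Proof. unfold meq, mtr; intros; auto. Qed.
Lemma madd_meq D X X' Y Y' : meq D X X' -> meq D Y Y' -> meq D (madd X Y) (madd X' Y').
Proof. unfold meq, madd; intros. rewrite H, H0; auto. Qed.
Lemma mscal_meq D c X Y : meq D X Y -> meq D (mscal c X) (mscal c Y).
Proof. unfold meq, mscal; intros. rewrite H; auto. Qed.
Lemma mtrace_meq D X Y : meq D X Y -> mtrace D X = mtrace D Y.
Proof. unfold meq, mtrace; intros. apply rsum_ext; auto. Qed.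
Lemma mmul_mid_l D X : meq D (mmul D mid X) X.
Proof. unfold meq, mmul, mid; intros. apply (rsum_delta D i (fun k => X k j)); auto. Qed.
Lemma mmul_mid_r D X : meq D (mmul D X mid) X.
Proof. unfold meq, mmul, mid; intros. apply (rsum_delta' D j (fun k => X i k)); auto. Qed.
Lemma mtr_mid : mtr mid = mid.
Proof. extensionality i; extensionality j; unfold mtr, mid. destruct (Nat.eq_dec j i), (Nat.eq_dec i j); auto; lia. Qed.
Lemma mmul_madd_r D X Y Z : mmul D X (madd Y Z) = madd (mmul D X Y) (mmul D X Z).
Proof. extensionality i; extensionality j; unfold mmul, madd. rewrite <- rsum_plus. apply rsum_ext; intros; ring. Qed.
Lemma mmul_madd_l D X Y Z : mmul D (madd X Y) Z = madd (mmul D X Z) (mmul D Y Z).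
Proof. extensionality i; extensionality j; unfold mmul, madd. rewrite <- rsum_plus. apply rsum_ext; intros; ring. Qed.
Lemma mmul_mscal_r D X c Y : mmul D X (mscal c Y) = mscal c (mmul D X Y).
Proof. extensionality i; extensionality j; unfold mmul, mscal. rewrite <- rsum_scal_l. apply rsum_ext; intros; ring. Qed.
Lemma mmul_mscal_l D X c Y : mmul D (mscal c X) Y = mscal c (mmul D X Y).
Proof. extensionality i; extensionality j; unfold mmul, mscal. rewrite <- rsum_scal_l. apply rsum_ext; intros; ring. Qed.
Lemma mtrace_madd D X Y : mtrace D (madd X Y) = mtrace D X + mtrace D Y.
Proof. unfold mtrace, madd. apply rsum_plus. Qed.
Lemma mtrace_mscal D c X : mtrace D (mscal c X) = c * mtrace D X.
Proof. unfold mtrace, mscal. apply rsum_scal_l. Qed.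

Lemma Aword_app D d (A : Fin.t d -> Mat) s1 s2 :
  meq D (Aword D A (s1 ++ s2)) (mmul D (Aword D A s1) (Aword D A s2)).
Proof. induction s1; simpl.
  - apply meq_sym, mmul_mid_l.
  - rewrite mmul_assoc. apply mmul_meq; [apply meq_refl|auto]. Qed.

Lemma tr_cong D Ql W X :
  mtrace D (mmul D Ql (mmul D (mmul D W X) (mtr W))) =
  mtrace D (mmul D (mmul D (mmul D (mtr W) Ql) W) X).
Proof. rewrite <- !mmul_assoc. rewrite tr_comm. rewrite <- !mmul_assoc. reflexivity. Qed.

Lemma Ptilde_as_Z D d (A : Fin.t d -> Mat) s Ql X :
  Ptilde D A s Ql X = mtrace D (mmul D (El_word D A s Ql) X).
Proof. unfold Ptilde, El_word. apply tr_cong. Qed.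

Lemma Ptilde_app D d (A : Fin.t d -> Mat) s1 s2 Ql Qr :
  Ptilde D A s2 (El_word D A s1 Ql) Qr = Ptilde D A (s1 ++ s2) Ql Qr.
Proof. unfold Ptilde, El_word.
  set (W1 := Aword D A s1). set (W2 := Aword D A s2).
  transitivity (mtrace D (mmul D Ql (mmul D (mmul D (mmul D W1 W2) Qr) (mtr (mmul D W1 W2))))).
  - rewrite mtr_mmul. rewrite !mmul_assoc. rewrite tr_comm. rewrite !mmul_assoc. reflexivity.
  - apply mtrace_meq. apply mmul_meq. apply meq_refl. apply mmul_meq. apply mmul_meq.
    apply meq_sym, Aword_app. apply meq_refl. apply mtr_meq, meq_sym, Aword_app. Qed.

Lemma Ptilde_nil D d (A : Fin.t d -> Mat) Ql Qr : Ptilde D A [] Ql Qr = mtrace D (mmul D Ql Qr).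
Proof. unfold Ptilde. simpl. apply mtrace_meq. apply mmul_meq. apply meq_refl.
  rewrite mtr_mid. eapply meq_trans. apply mmul_mid_r. apply mmul_mid_l. Qed.

Lemma Ptilde_chr D d (A : Fin.t d -> Mat) c Ql Qr : Ptilde D A [c] Ql Qr = ZR D A (Chr c) Ql Qr.
Proof. unfold Ptilde, ZR. simpl. apply mtrace_meq. apply mmul_meq. apply meq_refl.
  apply mmul_meq. apply mmul_meq. apply mmul_mid_r. apply meq_refl. apply mtr_meq, mmul_mid_r. Qed.


Definition bil n (Q : Mat) (x y : nat -> R) := rsum n (fun i => rsum n (fun j => x i * Q i j * y j)).
Definition ev (a : nat) : nat -> R := fun k => if Nat.eq_dec a k then 1 else 0.

Lemma PSD_qf n Q x : PSD n Q -> 0 <= bil n Q x x.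
Proof. intros [_ H]; apply H. Qed.

Lemma bil_addl n Q x c z y : bil n Q (fun k => x k + c * z k) y = bil n Q x y + c * bil n Q z y.
Proof. unfold bil. rewrite <- rsum_scal_l, <- rsum_plus. apply rsum_ext; intros.
  rewrite <- rsum_scal_l, <- rsum_plus. apply rsum_ext; intros. ring. Qed.
Lemma bil_addr n Q x c z y : bil n Q y (fun k => x k + c * z k) = bil n Q y x + c * bil n Q y z.
Proof. unfold bil. rewrite <- rsum_scal_l, <- rsum_plus. apply rsum_ext; intros.
  rewrite <- rsum_scal_l, <- rsum_plus. apply rsum_ext; intros. ring. Qed.
Lemma bil_lin n Q x c z : bil n Q (fun k => x k + c * z k) (fun k => x k + c * z k) =
  bil n Q x x + c * (bil n Q x z + bil n Q z x) + c * c * bil n Q z z.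
Proof. rewrite bil_addl, !bil_addr. ring. Qed.
Lemma bil_evl n Q a y : (a < n)%nat -> bil n Q (ev a) y = rsum n (fun j => Q a j * y j).
Proof. intros Ha. unfold bil, ev.
  rewrite <- (rsum_delta n a (fun i => rsum n (fun j => Q i j * y j))) by auto.
  apply rsum_ext; intros. rewrite <- rsum_scal_l. apply rsum_ext; intros. ring. Qed.
Lemma bil_evr n Q x b : (b < n)%nat -> bil n Q x (ev b) = rsum n (fun i => x i * Q i b).
Proof. intros Hb. unfold bil, ev. apply rsum_ext; intros i _.
  rewrite <- (rsum_delta n b (fun j => x i * Q i j)) by auto. apply rsum_ext; intros. ring. Qed.
Lemma bil_evev n Q a b : (a < n)%nat -> (b < n)%nat -> bil n Q (ev a) (ev b) = Q a b.
Proof. intros Ha Hb. rewrite bil_evl by auto. unfold ev.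
  rewrite <- (rsum_delta n b (fun j => Q a j)) by auto. apply rsum_ext; intros. ring. Qed.

Lemma PSD_diag n Q a : PSD n Q -> (a < n)%nat -> 0 <= Q a a.
Proof. intros H Ha. rewrite <- (bil_evev n Q a a) by auto. apply PSD_qf; auto. Qed.

Lemma PSD_zero_diag n Q i a : PSD n Q -> (i < n)%nat -> (a < n)%nat -> Q a a = 0 -> Q i a = 0.
Proof. intros HP Hi Ha H0. destruct (Req_dec (Q i a) 0) as [E|E]; auto. exfalso.
  set (t := - (Q i i + 1) / (2 * Q i a)).
  pose proof (PSD_qf n Q (fun k => ev i k + t * ev a k) HP) as Hq.
  rewrite bil_lin in Hq. rewrite !bil_evev in Hq by auto.
  rewrite (proj1 HP a i) in Hq by auto. rewrite H0 in Hq.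
  replace (t * (Q i a + Q i a)) with (- (Q i i + 1)) in Hq by (unfold t; field; auto). lra. Qed.

Lemma PSD_restrict n Q : PSD (S n) Q -> PSD n Q.
Proof. intros [Hs Hq]. split. intros; apply Hs; lia.
  intros x. set (x' := fun k => if Nat.eq_dec k n then 0 else x k).
  specialize (Hq x'). replace (rsum n (fun i => rsum n (fun j => x i * Q i j * x j))) with
    (rsum (S n) (fun i => rsum (S n) (fun j => x' i * Q i j * x' j))); auto.
  simpl. assert (Hn : x' n = 0) by (unfold x'; destruct (Nat.eq_dec n n); [lra|lia]). rewrite Hn.
  rewrite (rsum_zero' n (fun j => 0 * Q n j * x' j)) by (intros; ring).
  transitivity (rsum n (fun i => rsum n (fun j => x' i * Q i j * x' j)) + 0).
  { f_equal. apply rsum_ext; intros; ring. ring. }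
  rewrite Rplus_0_r. apply rsum_ext; intros i Hi. apply rsum_ext; intros j Hj. unfold x'.
  destruct (Nat.eq_dec i n), (Nat.eq_dec j n); try lia. auto. Qed.

Lemma PSD_meq n X Y : meq n X Y -> PSD n X -> PSD n Y.
Proof. intros E [Hs Hq]. split. intros; rewrite <- !E by auto; auto.
  intros x. specialize (Hq x). erewrite rsum_ext. apply Hq. intros i Hi. apply rsum_ext. intros j Hj.
  rewrite E; auto. Qed.

Lemma PSD_madd n X Y : PSD n X -> PSD n Y -> PSD n (madd X Y).
Proof. intros [Hs Hq] [Hs' Hq']. split. intros; unfold madd; rewrite Hs, Hs'; auto.
  intros x. specialize (Hq x). specialize (Hq' x). unfold madd.
  erewrite rsum_ext. 2:{ intros. erewrite rsum_ext. 2:{ intros. instantiate (1 := fun j => x k * X k j * x j + x k * Y k j * x j). simpl. ring. } apply rsum_plus. }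
  rewrite rsum_plus. lra. Qed.

Lemma PSD_mscal n c X : 0 <= c -> PSD n X -> PSD n (mscal c X).
Proof. intros Hc [Hs Hq]. split. intros; unfold mscal; rewrite Hs; auto.
  intros x. specialize (Hq x). unfold mscal.
  erewrite rsum_ext. 2:{ intros. erewrite rsum_ext. 2:{ intros. instantiate (1 := fun j => c * (x k * X k j * x j)). simpl. ring. } apply rsum_scal_l. }
  rewrite rsum_scal_l. apply Rmult_le_pos; auto. Qed.

Lemma PSD_mid n : PSD n mid.
Proof. split. intros; unfold mid; destruct (Nat.eq_dec i j), (Nat.eq_dec j i); auto; lia.
  intros x. apply rsum_nonneg. intros i Hi.
  rewrite (rsum_ext n _ (fun j => (if Nat.eq_dec i j then 1 else 0) * (x i * x j))).
  rewrite rsum_delta by auto. apply Rle_0_sqr.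
  intros; unfold mid; destruct (Nat.eq_dec i k); ring. Qed.

Lemma sum4 n (X : nat -> nat -> R) (Q : Mat) (Y : nat -> nat -> R) :
  rsum n (fun l => rsum n (fun k => rsum n (fun i => X i l) * Q l k * rsum n (fun j => Y j k))) =
  rsum n (fun i => rsum n (fun j => rsum n (fun k => rsum n (fun l => X i l * Q l k * Y j k)))).
Proof.
  transitivity (rsum n (fun l => rsum n (fun k => rsum n (fun i => rsum n (fun j => X i l * Q l k * Y j k))))).
  { apply rsum_ext; intros l _; apply rsum_ext; intros k _. rewrite <- rsum_scal_r, <- rsum_scal_r.
    apply rsum_ext; intros i _. rewrite <- rsum_scal_l. apply rsum_ext; intros; ring. }
  rewrite rsum_swap.
  transitivity (rsum n (fun k => rsum n (fun i => rsum n (fun l => rsum n (fun j => X i l * Q l k * Y j k))))).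
  { apply rsum_ext; intros k _. apply rsum_swap. }
  rewrite rsum_swap.
  transitivity (rsum n (fun i => rsum n (fun k => rsum n (fun j => rsum n (fun l => X i l * Q l k * Y j k))))).
  { apply rsum_ext; intros i _. apply rsum_ext; intros k _. apply rsum_swap. }
  apply rsum_ext; intros i _. apply rsum_swap. Qed.

Lemma PSD_cong n Q M : PSD n Q -> PSD n (mmul n (mmul n M Q) (mtr M)).
Proof. intros [Hs Hq]. split.
  - intros i j Hi Hj. unfold mmul, mtr.
    transitivity (rsum n (fun k => rsum n (fun l => M i l * Q l k * M j k))).
    { apply rsum_ext; intros; rewrite <- rsum_scal_r; apply rsum_ext; intros; ring. }
    rewrite rsum_swap. apply rsum_ext; intros l Hl; rewrite <- rsum_scal_r; apply rsum_ext; intros k Hk.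
    rewrite Hs by auto. ring.
  - intros x. set (y := fun l => rsum n (fun i => x i * M i l)). specialize (Hq y).
    replace (rsum n (fun i => rsum n (fun j => x i * mmul n (mmul n M Q) (mtr M) i j * x j)))
      with (rsum n (fun i => rsum n (fun j => y i * Q i j * y j))); auto.
    unfold y, mmul, mtr. rewrite sum4. apply rsum_ext; intros i _; apply rsum_ext; intros j _.
    symmetry. rewrite <- rsum_scal_l, <- rsum_scal_r. apply rsum_ext; intros k _.
    rewrite <- rsum_scal_r, <- rsum_scal_l, <- rsum_scal_r. apply rsum_ext; intros; ring. Qed.

Lemma rsum_minus n f g : rsum n f - rsum n g = rsum n (fun k => f k - g k).
Proof. induction n; simpl; [lra|rewrite <- IHn; lra]. Qed.

Lemma tr_zero_col n A B : (forall i, (i <= n)%nat -> A i n = 0 /\ A n i = 0) ->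
  rsum (S n) (fun i => rsum (S n) (fun k => A i k * B k i)) = rsum n (fun i => rsum n (fun k => A i k * B k i)).
Proof. intros H. simpl. rewrite (proj1 (H n ltac:(lia))).
  rewrite (rsum_zero' n (fun k => A n k * B k n)). 2:{ intros k Hk. rewrite (proj2 (H k ltac:(lia))). ring. }
  rewrite Rplus_0_l, Rmult_0_l, Rplus_0_r. apply rsum_ext. intros i Hi.
  rewrite (proj1 (H i ltac:(lia))). ring. Qed.

Lemma sq_sum n (z : nat -> R) : rsum n (fun i => rsum n (fun j => z i * z j)) = rsum n z * rsum n z.
Proof. rewrite <- rsum_scal_r. apply rsum_ext; intros. apply rsum_scal_l. Qed.

Lemma tr_psd n A B : PSD n A -> PSD n B -> 0 <= rsum n (fun i => rsum n (fun k => A i k * B k i)).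
Proof. revert A B. induction n; intros A B HA HB. simpl; lra.
  pose proof (PSD_diag _ _ n HA ltac:(lia)) as Ha.
  destruct (Req_dec (A n n) 0) as [Ha0|Ha0].
  - rewrite tr_zero_col. apply IHn; apply PSD_restrict; auto.
    intros i Hi. assert (A i n = 0) by (apply (PSD_zero_diag (S n)); auto; lia).
    split; auto. rewrite (proj1 HA) by lia. auto.
  - set (a := A n n) in *. set (q := fun i => A i n).
    set (A' := fun i j => A i j - q i * q j / a).
    assert (E : rsum (S n) (fun i => rsum (S n) (fun k => A i k * B k i)) =
                rsum (S n) (fun i => rsum (S n) (fun k => A' i k * B k i)) + bil (S n) B q q / a).
    { unfold bil, Rdiv. rewrite <- rsum_scal_r, <- rsum_plus. apply rsum_ext; intros i Hi.
      rewrite <- rsum_scal_r, <- rsum_plus. apply rsum_ext; intros k Hk. unfold A'.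
      rewrite (proj1 HB i k) by auto. field. auto. }
    assert (HA' : PSD (S n) A').
    { split. intros i j Hi Hj. unfold A'. rewrite (proj1 HA i j) by auto. field; auto.
      intros x. set (s := rsum (S n) (fun i => x i * q i)).
      set (y := fun k => x k + (- (s / a)) * ev n k).
      pose proof (PSD_qf _ _ y HA) as Hy. unfold y in Hy. rewrite bil_lin in Hy.
      rewrite bil_evev, bil_evr, bil_evl in Hy by lia.
      rewrite (rsum_ext (S n) (fun j => A n j * x j) (fun i => x i * q i)) in Hy.
      2:{ intros; unfold q; rewrite (proj1 HA n k) by lia; ring. }
      change (rsum (S n) (fun i => x i * A i n)) with s in Hy. fold s in Hy. fold a in Hy.
      replace (rsum (S n) (fun i => rsum (S n) (fun j => x i * A' i j * x j)))
        with (bil (S n) A x x - s * s / a).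
      replace (bil (S n) A x x + - (s / a) * (s + s) + - (s / a) * - (s / a) * a) with (bil (S n) A x x - s * s / a) in Hy by (field; auto). auto.
      unfold bil, A', s. rewrite <- sq_sum. unfold Rdiv. rewrite <- rsum_scal_r.
      rewrite rsum_minus. apply rsum_ext; intros i _.
      rewrite <- rsum_scal_r, rsum_minus. apply rsum_ext; intros; ring. }
    rewrite E. apply Rplus_le_le_0_compat.
    + rewrite tr_zero_col. apply IHn. apply PSD_restrict; auto. apply PSD_restrict; auto.
      intros i Hi. unfold A', q. fold a. split. field; auto.
      rewrite (proj1 HA n i) by lia. field; auto.
    + unfold Rdiv. apply Rmult_le_pos. apply PSD_qf; auto. left; apply Rinv_0_lt_compat; lra.
Qed.

Lemma tr_psd' n A B : PSD n A -> PSD n B -> 0 <= mtrace n (mmul n A B).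
Proof. apply tr_psd. Qed.


Definition Tmeq D (T : Mat -> Mat) := forall X Y, meq D X Y -> meq D (T X) (T Y).
Definition Tadd D (T : Mat -> Mat) := forall X Y, meq D (T (madd X Y)) (madd (T X) (T Y)).
Definition Tscal D (T : Mat -> Mat) := forall c X, meq D (T (mscal c X)) (mscal c (T X)).

Lemma iter_meq D T : Tmeq D T -> forall n X Y, meq D X Y -> meq D (iter_op T n X) (iter_op T n Y).
Proof. intros HT n; induction n; simpl; auto. Qed.
Lemma psum_meq D T : Tmeq D T -> forall n X Y, meq D X Y -> meq D (psum_op T n X) (psum_op T n Y).
Proof. intros HT n; induction n; simpl; intros; auto. apply madd_meq; auto. apply HT, iter_meq; auto. Qed.
Lemma iter_add D T : Tmeq D T -> Tadd D T -> forall n X Y, meq D (iter_op T n (madd X Y)) (madd (iter_op T n X) (iter_op T n Y)).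
Proof. intros HT HA n; induction n; simpl; intros. apply meq_refl.
  eapply meq_trans. apply HT, IHn. apply HA. Qed.
Lemma psum_add D T : Tmeq D T -> Tadd D T -> forall n X Y, meq D (psum_op T n (madd X Y)) (madd (psum_op T n X) (psum_op T n Y)).
Proof. intros HT HA n; induction n; intros X Y. apply meq_refl.
  intros i j Hi Hj. change (psum_op T (S n) (madd X Y) i j) with (psum_op T n (madd X Y) i j + iter_op T (S n) (madd X Y) i j).
  rewrite IHn, (iter_add D T HT HA (S n)) by auto. simpl. unfold madd. ring. Qed.
Lemma iter_scal D T : Tmeq D T -> Tscal D T -> forall n c X, meq D (iter_op T n (mscal c X)) (mscal c (iter_op T n X)).
Proof. intros HT HA n; induction n; simpl; intros. apply meq_refl.
  eapply meq_trans. apply HT, IHn. apply HA. Qed.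
Lemma psum_scal D T : Tmeq D T -> Tscal D T -> forall n c X, meq D (psum_op T n (mscal c X)) (mscal c (psum_op T n X)).
Proof. intros HT HA n; induction n; intros c X. apply meq_refl.
  intros i j Hi Hj. change (psum_op T (S n) (mscal c X) i j) with (psum_op T n (mscal c X) i j + iter_op T (S n) (mscal c X) i j).
  rewrite IHn, (iter_scal D T HT HA (S n)) by auto. simpl. unfold madd, mscal. ring. Qed.


Lemma Er_meq D d (A : Fin.t d -> Mat) e : Tmeq D (Er D A e).
Proof. induction e; simpl; intros X Y H.
  - apply mmul_meq. apply mmul_meq. apply meq_refl. auto. apply meq_refl.
  - auto.
  - apply madd_meq; auto.
  - intros i j Hi Hj. unfold mlim. f_equal. extensionality N. apply (psum_meq D); auto. Qed.

Lemma star_cv D d (A : Fin.t d -> Mat) e1 : Conv D A (Star e1) ->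
  forall Q i j, (i < D)%nat -> (j < D)%nat ->
  Un_cv (fun N => psum_op (Er D A e1) N Q i j) (Er D A (Star e1) Q i j).
Proof. intros [_ H] Q i j Hi Hj. destruct (H Q i j Hi Hj) as [l Hl]. simpl. unfold mlim.
  rewrite (lim_cv _ l Hl). auto. Qed.

Lemma Er_lin D d (A : Fin.t d -> Mat) e : Conv D A e -> Tadd D (Er D A e) /\ Tscal D (Er D A e).
Proof. induction e; simpl; intros HC.
  - split; red; intros; intros i j Hi Hj.
    + rewrite mmul_madd_r, mmul_madd_l. auto.
    + rewrite mmul_mscal_r, mmul_mscal_l. auto.
  - destruct HC as [H1 H2]. destruct (IHe1 H1) as [A1 S1]. destruct (IHe2 H2) as [A2 S2]. split; red; intros.
    + eapply meq_trans. apply (Er_meq D d A e1). apply A2. apply A1.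
    + eapply meq_trans. apply (Er_meq D d A e1). apply S2. apply S1.
  - destruct HC as [H1 H2]. destruct (IHe1 H1) as [A1 S1]. destruct (IHe2 H2) as [A2 S2]. split; red; intros; intros i j Hi Hj.
    + unfold madd at 1. rewrite A1, A2 by auto. unfold madd. ring.
    + unfold madd at 1. rewrite S1, S2 by auto. unfold madd, mscal. ring.
  - pose proof (star_cv D d A e HC) as Hcv. destruct HC as [H1 H2]. destruct (IHe H1) as [A1 S1]. split; red; intros; intros i j Hi Hj.
    + apply (UL_sequence (fun N => psum_op (Er D A e) N (madd X Y) i j)). apply Hcv; auto.
      apply (cv_ext (fun N => psum_op (Er D A e) N X i j + psum_op (Er D A e) N Y i j)).
      intros; rewrite (psum_add D); auto. apply Er_meq.
      apply CV_plus; apply Hcv; auto.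
    + apply (UL_sequence (fun N => psum_op (Er D A e) N (mscal c X) i j)). apply Hcv; auto.
      apply (cv_ext (fun N => c * psum_op (Er D A e) N X i j)).
      intros; rewrite (psum_scal D); auto. apply Er_meq.
      apply cv_scal; apply Hcv; auto. Qed.

Definition Eb (k l : nat) : Mat := fun i j => (if Nat.eq_dec i k then 1 else 0) * (if Nat.eq_dec j l then 1 else 0).

Lemma Er_rsum D d (A : Fin.t d -> Mat) e : Conv D A e -> forall n (F : nat -> Mat),
  meq D (Er D A e (fun i j => rsum n (fun k => F k i j))) (fun i j => rsum n (fun k => Er D A e (F k) i j)).
Proof. intros HC. destruct (Er_lin D d A e HC) as [HA HS]. induction n; intros F.
  - simpl. intros i j Hi Hj. transitivity (Er D A e (mscal 0 mzero) i j).
    apply Er_meq; auto. intros a b _ _; unfold mscal, mzero; ring.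
    rewrite HS by auto. unfold mscal; ring.
  - change (fun i j => rsum (S n) (fun k => F k i j)) with (madd (fun i j => rsum n (fun k => F k i j)) (F n)).
    eapply meq_trans. apply HA. intros i j Hi Hj. unfold madd. rewrite IHn by auto. simpl. auto. Qed.

Lemma Er_repr D d (A : Fin.t d -> Mat) e : Conv D A e -> forall Q i j, (i < D)%nat -> (j < D)%nat ->
  Er D A e Q i j = rsum D (fun k => rsum D (fun l => Q k l * Er D A e (Eb k l) i j)).
Proof. intros HC Q i j Hi Hj. destruct (Er_lin D d A e HC) as [HA HS].
  transitivity (Er D A e (fun i j => rsum D (fun k => (fun k i j => rsum D (fun l => Q k l * Eb k l i j)) k i j)) i j).
  { apply Er_meq; auto. intros a b Ha Hb. simpl. unfold Eb.
    rewrite <- (rsum_delta D a (fun k => Q k b)) by auto. apply rsum_ext; intros k _.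
    symmetry. rewrite (rsum_ext D _ (fun l => (if Nat.eq_dec b l then 1 else 0) * ((if Nat.eq_dec a k then 1 else 0) * Q k l))). rewrite (rsum_delta D b (fun l => (if Nat.eq_dec a k then 1 else 0) * Q k l)) by auto. ring. intros; ring. }
  rewrite Er_rsum by auto. apply rsum_ext; intros k _.
  change (fun i j => rsum D (fun l => Q k l * Eb k l i j)) with (fun i j => rsum D (fun l => mscal (Q k l) (Eb k l) i j)).
  rewrite Er_rsum by auto. apply rsum_ext; intros l _. rewrite HS by auto. auto. Qed.

Lemma Er_cont D d (A : Fin.t d -> Mat) e : Conv D A e -> forall (Qs : nat -> Mat) Q,
  (forall i j, (i < D)%nat -> (j < D)%nat -> Un_cv (fun N => Qs N i j) (Q i j)) ->
  forall i j, (i < D)%nat -> (j < D)%nat -> Un_cv (fun N => Er D A e (Qs N) i j) (Er D A e Q i j).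
Proof. intros HC Qs Q H i j Hi Hj. rewrite Er_repr by auto.
  apply (cv_ext (fun N => rsum D (fun k => rsum D (fun l => Qs N k l * Er D A e (Eb k l) i j)))).
  intros; rewrite Er_repr; auto.
  apply cv_rsum; intros k Hk. apply cv_rsum; intros l Hl. apply CV_mult. apply H; auto. apply cv_const. Qed.

Lemma psum_succ D T : Tmeq D T -> Tadd D T -> forall N Q, meq D (psum_op T (S N) Q) (madd Q (T (psum_op T N Q))).
Proof. intros HT HA N. induction N; intros Q. simpl. apply meq_refl.
  intros i j Hi Hj. change (psum_op T (S (S N)) Q i j) with (psum_op T (S N) Q i j + T (iter_op T (S N) Q) i j).
  rewrite IHN by auto. change (psum_op T (S N) Q) with (madd (psum_op T N Q) (iter_op T (S N) Q)).
  unfold madd at 1 2.   rewrite (HA (psum_op T N Q) (iter_op T (S N) Q) i j Hi Hj). unfold madd. ring. Qed.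

Lemma Er_fix D d (A : Fin.t d -> Mat) e1 : Conv D A (Star e1) -> forall Q,
  meq D (Er D A (Star e1) Q) (madd Q (Er D A e1 (Er D A (Star e1) Q))).
Proof. intros HC Q i j Hi Hj. pose proof (star_cv D d A e1 HC) as Hcv.
  destruct HC as [H1 _]. destruct (Er_lin D d A e1 H1) as [HA _].
  apply (UL_sequence (fun N => psum_op (Er D A e1) (S N) Q i j)).
  apply (cv_shift_inv (fun N => psum_op (Er D A e1) N Q i j)). apply Hcv; auto.
  apply (cv_ext (fun N => Q i j + Er D A e1 (psum_op (Er D A e1) N Q) i j)).
  intros; rewrite (psum_succ D); auto. apply Er_meq.
  apply CV_plus. apply cv_const. apply Er_cont; auto. Qed.

Lemma PSD_lim D (X : nat -> Mat) Y : (forall N, PSD D (X N)) ->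
  (forall i j, (i < D)%nat -> (j < D)%nat -> Un_cv (fun N => X N i j) (Y i j)) -> PSD D Y.
Proof. intros HP H. split.
  - intros i j Hi Hj. apply (UL_sequence (fun N => X N i j)). auto.
    apply (cv_ext (fun N => X N j i)). intros; rewrite (proj1 (HP n)); auto. auto.
  - intros x. apply (cv_nonneg (fun N => rsum D (fun i => rsum D (fun j => x i * X N i j * x j)))).
    intros; apply (proj2 (HP n)).
    apply cv_rsum; intros i Hi; apply cv_rsum; intros j Hj. apply CV_mult. apply CV_mult. apply cv_const.
    auto. apply cv_const. Qed.

Lemma Er_PSD D d (A : Fin.t d -> Mat) e : Conv D A e -> forall Q, PSD D Q -> PSD D (Er D A e Q).
Proof. induction e; simpl; intros HC Q HQ.
  - apply PSD_cong; auto.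
  - destruct HC; auto.
  - destruct HC; apply PSD_madd; auto.
  - pose proof (star_cv D d A e HC Q) as Hcv. destruct HC as [H1 _].
    assert (Hit : forall n, PSD D (iter_op (Er D A e) n Q)) by (induction n; simpl; auto).
    assert (Hps : forall n, PSD D (psum_op (Er D A e) n Q)) by (induction n; simpl; auto; apply PSD_madd; auto).
    apply (PSD_lim D (fun N => psum_op (Er D A e) N Q)); auto. Qed.

Lemma El_PSD D d (A : Fin.t d -> Mat) s Q : PSD D Q -> PSD D (El_word D A s Q).
Proof. intros H. apply (PSD_cong D Q (mtr (Aword D A s)) H). Qed.

Lemma ZR_nonneg D d (A : Fin.t d -> Mat) e Ql Qr : Conv D A e -> PSD D Ql -> PSD D Qr -> 0 <= ZR D A e Ql Qr.
Proof. intros. apply tr_psd'; auto. apply Er_PSD; auto. Qed.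

Lemma Ptilde_nonneg D d (A : Fin.t d -> Mat) s Ql Qr : PSD D Ql -> PSD D Qr -> 0 <= Ptilde D A s Ql Qr.
Proof. intros. apply tr_psd'; auto. apply PSD_cong; auto. Qed.

Lemma ZR_star D d (A : Fin.t d -> Mat) e1 Ql Qr : Conv D A (Star e1) ->
  ZR D A (Star e1) Ql Qr = mtrace D (mmul D Ql Qr) + ZR D A (Cat e1 (Star e1)) Ql Qr.
Proof. intros HC. unfold ZR. rewrite <- mtrace_madd, <- mmul_madd_r. apply mtrace_meq.
  apply mmul_meq. apply meq_refl. apply Er_fix; auto. Qed.

Lemma ZR_alt D d (A : Fin.t d -> Mat) e1 e2 Ql Qr :
  ZR D A (Alt e1 e2) Ql Qr = ZR D A e1 Ql Qr + ZR D A e2 Ql Qr.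
Proof. unfold ZR. simpl. rewrite mmul_madd_r, mtrace_madd. auto. Qed.


Lemma star_pow_nil {d} (f : word d -> R) n : star_pow f n [] = f [] ^ n.
Proof. induction n; simpl; auto. rewrite IHn. ring. Qed.

Lemma star_pow_nonneg {d} (f : word d -> R) : (forall t, 0 <= f t) -> forall n s, 0 <= star_pow f n s.
Proof. intros H n; induction n; intros s. destruct s; simpl; lra. cbn [star_pow].
  apply lsum_nonneg; intros; apply Rmult_le_pos; auto. Qed.

Lemma star_pow_big {d} (f : word d -> R) : f [] = 0 -> forall n s, (length s < n)%nat -> star_pow f n s = 0.
Proof. intros H0 n; induction n; intros s Hs. lia. cbn [star_pow]. apply lsum_zero. intros p Hp.
  destruct p as [p1 p2]. destruct (splits_in s (p1,p2) Hp) as [_ [[E|E] _]]; simpl in *. subst p1; rewrite H0; ring. rewrite IHn by lia. ring. Qed.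

Lemma F_const {d} (f : word d -> R) : f [] = 0 -> forall s N, (length s <= N)%nat ->
  rsum (S N) (fun n => star_pow f n s) = rsum (S (length s)) (fun n => star_pow f n s).
Proof. intros H0 s N HN. induction N. assert (length s = 0%nat) by lia. rewrite H. auto.
  destruct (Nat.eq_dec (length s) (S N)) as [E|E]. rewrite E; auto.
  change (rsum (S (S N)) (fun n => star_pow f n s)) with (rsum (S N) (fun n => star_pow f n s) + star_pow f (S N) s).
  rewrite star_pow_big by (auto; lia). rewrite IHN by lia. ring. Qed.

Lemma bil_madd D X Y x : bil D (madd X Y) x x = bil D X x x + bil D Y x x.
Proof. unfold bil, madd. rewrite <- rsum_plus. apply rsum_ext; intros. rewrite <- rsum_plus. apply rsum_ext; intros; ring. Qed.

Lemma bil_ev0 D X : (0 < D)%nat -> bil D X (ev 0) (ev 0) = X 0%nat 0%nat.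
Proof. intros; apply bil_evev; auto. Qed.

Lemma star_inner_zero D d (A : Fin.t d -> Mat) e1 : (0 < D)%nat -> Conv D A (Star e1) ->
  (exists k, count e1 [] = INR k) ->
  (forall Q, PSD D Q -> forall x, count e1 [] * bil D Q x x <= bil D (Er D A e1 Q) x x) ->
  count e1 [] = 0.
Proof. intros HD HC [k Hk] HB. destruct k. simpl in Hk; auto. exfalso.
  assert (Hc : 1 <= count e1 []) by (rewrite Hk, S_INR; pose proof (pos_INR k); lra).
  destruct HC as [H1 H2]. destruct (H2 mid 0%nat 0%nat HD HD) as [l Hl].
  assert (Hit : forall n, PSD D (iter_op (Er D A e1) n mid) /\ 1 <= iter_op (Er D A e1) n mid 0%nat 0%nat).
  { induction n; simpl. split. apply PSD_mid. unfold mid; simpl; lra.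
    destruct IHn as [HP Hv]. split. apply Er_PSD; auto.
    specialize (HB _ HP (ev 0)). rewrite !bil_ev0 in HB by auto. nra. }
  assert (Hps : forall N, INR (S N) <= psum_op (Er D A e1) N mid 0%nat 0%nat).
  { induction N. simpl. unfold mid; simpl; lra.
    change (psum_op (Er D A e1) (S N) mid 0%nat 0%nat) with (psum_op (Er D A e1) N mid 0%nat 0%nat + iter_op (Er D A e1) (S N) mid 0%nat 0%nat).
    rewrite S_INR. pose proof (proj2 (Hit (S N))). lra. }
  destruct (cv_bound _ _ Hl) as [N0 HN0].
  destruct (INR_archimed 1 (l + 1) ltac:(lra)) as [m Hm].
  specialize (HN0 (N0 + m)%nat ltac:(lia)). specialize (Hps (N0 + m)%nat).
  rewrite S_INR, plus_INR in Hps. pose proof (pos_INR N0). lra. Qed.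

Lemma count_nil D d (A : Fin.t d -> Mat) e : (0 < D)%nat -> Conv D A e ->
  (exists k, count e [] = INR k) /\
  (forall Q, PSD D Q -> forall x, count e [] * bil D Q x x <= bil D (Er D A e Q) x x).
Proof. intros HD. induction e; intros HC.
  - split. exists 0%nat. simpl. auto. intros Q HQ x. simpl. rewrite Rmult_0_l.
    apply PSD_qf. apply (Er_PSD D d A (Chr t)); simpl; auto.
  - destruct HC as [H1 H2]. destruct (IHe1 H1) as [[k1 K1] B1]. destruct (IHe2 H2) as [[k2 K2] B2].
    change (count (Cat e1 e2) []) with (count e1 [] * count e2 [] + 0). rewrite Rplus_0_r.
    split. exists (k1 * k2)%nat. rewrite mult_INR, K1, K2; auto.
    intros Q HQ x. simpl. specialize (B2 Q HQ x). specialize (B1 _ (Er_PSD D d A e2 H2 Q HQ) x).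
    pose proof (pos_INR k1). rewrite <- K1 in H. nra.
  - destruct HC as [H1 H2]. destruct (IHe1 H1) as [[k1 K1] B1]. destruct (IHe2 H2) as [[k2 K2] B2].
    simpl. split. exists (k1 + k2)%nat. rewrite plus_INR, K1, K2; auto.
    intros Q HQ x. specialize (B2 Q HQ x). specialize (B1 Q HQ x).
    rewrite bil_madd. lra.
  - pose proof HC as HC'. destruct HC as [H1 H2]. destruct (IHe H1) as [K1 B1].
    pose proof (star_inner_zero D d A e HD HC' K1 B1) as Z.
    assert (C1 : count (Star e) [] = 1).
    { cbn [count]. apply lim_cv. apply cv_ev. exists 0%nat. intros n _.
      rewrite rsum_shift. rewrite (rsum_ext n _ (fun _ => 0)). rewrite rsum_zero. simpl; lra.
      intros. rewrite star_pow_nil, Z. simpl. ring. }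
    rewrite C1. split. exists 1%nat; simpl; auto.
    intros Q HQ x. rewrite Rmult_1_l.
    assert (Hit : forall n, PSD D (iter_op (Er D A e) n Q)) by (induction n; simpl; auto; apply Er_PSD; auto).
    apply (cv_le (fun _ => bil D Q x x) (fun N => bil D (psum_op (Er D A e) N Q) x x)).
    + intros N. induction N. simpl; lra.
      change (psum_op (Er D A e) (S N) Q) with (madd (psum_op (Er D A e) N Q) (iter_op (Er D A e) (S N) Q)).
      rewrite bil_madd. pose proof (PSD_qf D _ x (Hit (S N))). lra.
    + apply cv_const.
    + unfold bil. apply cv_rsum; intros i Hi; apply cv_rsum; intros j Hj. apply CV_mult. apply CV_mult. apply cv_const.
      apply star_cv; auto. apply cv_const. Qed.

Lemma count_inner_zero D d (A : Fin.t d -> Mat) e1 : (0 < D)%nat -> Conv D A (Star e1) -> count e1 [] = 0.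
Proof. intros HD HC. destruct (count_nil D d A e1 HD (proj1 HC)) as [K B].
  apply (star_inner_zero D d A e1); auto. Qed.

Lemma count_star_val D d (A : Fin.t d -> Mat) e1 s : (0 < D)%nat -> Conv D A (Star e1) ->
  count (Star e1) s = rsum (S (length s)) (fun n => star_pow (count e1) n s).
Proof. intros HD HC. pose proof (count_inner_zero D d A e1 HD HC) as Z. simpl. apply lim_cv.
  apply cv_ev. exists (length s). intros n Hn. apply F_const; auto. Qed.

Lemma count_nonneg D d (A : Fin.t d -> Mat) e : (0 < D)%nat -> Conv D A e -> forall s, 0 <= count e s.
Proof. intros HD. induction e; intros HC s.
  - simpl. unfold is_single. destruct s as [|c [|]]; try lra. destruct (Fin.eq_dec t c); lra.
  - destruct HC. cbn [count]. apply lsum_nonneg. intros; apply Rmult_le_pos; auto.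
  - destruct HC. simpl. pose proof (IHe1 H s). pose proof (IHe2 H0 s). lra.
  - rewrite (count_star_val D d A) by auto. apply rsum_nonneg. intros. apply star_pow_nonneg. apply IHe. apply HC. Qed.

Definition isnil {d} (s : word d) : R := match s with [] => 1 | _ => 0 end.

Lemma count_star_eq D d (A : Fin.t d -> Mat) e1 s : (0 < D)%nat -> Conv D A (Star e1) ->
  count (Star e1) s = isnil s + count (Cat e1 (Star e1)) s.
Proof. intros HD HC. pose proof (count_inner_zero D d A e1 HD HC) as Z.
  rewrite (count_star_val D d A) by auto. rewrite <- (F_const _ Z s (S (length s))) by lia.
  rewrite rsum_shift. f_equal. change (count (Cat e1 (Star e1)) s) with (lsum (fun p => count e1 (fst p) * count (Star e1) (snd p)) (splits s)). 
  transitivity (lsum (fun p => rsum (S (length s)) (fun k => count e1 (fst p) * star_pow (count e1) k (snd p))) (splits s)).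
  rewrite lsum_rsum. apply rsum_ext. intros. auto.
  apply lsum_ext_in. intros p Hp. rewrite rsum_scal_l. f_equal.
  rewrite (count_star_val D d A) by auto. apply F_const; auto. apply splits_in; auto. Qed.


Definition Reach D {d} (A : Fin.t d -> Mat) (c : call d) :=
  forall c', clos_refl_trans (call d) (step D A) c c' -> norm_pos D A c'.

Lemma reach_step D d (A : Fin.t d -> Mat) c c' : Reach D A c -> step D A c c' -> Reach D A c'.
Proof. intros H Hs c'' Hc. apply H. eapply rt_trans. apply rt_step; eauto. auto. Qed.

Definition V D {d} (A : Fin.t d -> Mat) e Ql Qr (s : word d) :=
  count e s * Ptilde D A s Ql Qr / ZR D A e Ql Qr.

Lemma V_nonneg D d (A : Fin.t d -> Mat) e Ql Qr s : (0 < D)%nat -> Conv D A e -> PSD D Ql -> PSD D Qr ->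
  0 < ZR D A e Ql Qr -> 0 <= V D A e Ql Qr s.
Proof. intros. unfold V, Rdiv. apply Rmult_le_pos. apply Rmult_le_pos.
  apply (count_nonneg D d A); auto. apply Ptilde_nonneg; auto. left; apply Rinv_0_lt_compat; auto. Qed.

Lemma ZR_cat D d (A : Fin.t d -> Mat) e1 e2 Ql Qr : ZR D A (Cat e1 e2) Ql Qr = ZR D A e1 Ql (Er D A e2 Qr).
Proof. reflexivity. Qed.

Lemma P_Z D d (A : Fin.t d -> Mat) e2 s1 Ql Qr : Ptilde D A s1 Ql (Er D A e2 Qr) = ZR D A e2 (El_word D A s1 Ql) Qr.
Proof. rewrite Ptilde_as_Z. reflexivity. Qed.

Lemma isnil_P D d (A : Fin.t d -> Mat) (s : word d) Ql Qr :
  isnil s * Ptilde D A s Ql Qr = isnil s * mtrace D (mmul D Ql Qr).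
Proof. destruct s; simpl. rewrite Ptilde_nil; auto. ring. Qed.

Lemma supp D d (A : Fin.t d -> Mat) e : (0 < D)%nat -> Conv D A e -> forall Ql Qr, PSD D Ql -> PSD D Qr ->
  ZR D A e Ql Qr = 0 -> forall s, count e s * Ptilde D A s Ql Qr = 0.
Proof. intros HD. induction e; intros HC Ql Qr HPl HPr HZ s.
  - cbn [count]. unfold is_single. destruct s as [|c [|c' s']]; try ring.
    destruct (Fin.eq_dec t c). subst. rewrite Ptilde_chr, HZ. ring. ring.
  - destruct HC as [H1 H2]. cbn [count]. rewrite <- lsum_scal_r. apply lsum_zero.
    intros [s1 s2] Hp. destruct (splits_in s (s1,s2) Hp) as [E _]. simpl in *. rewrite <- E.
    pose proof (IHe1 H1 Ql (Er D A e2 Qr) HPl (Er_PSD D d A e2 H2 Qr HPr) HZ s1) as T1.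
    rewrite P_Z in T1. destruct (Req_dec (count e1 s1) 0) as [C|C]. rewrite C; ring.
    assert (Z2 : ZR D A e2 (El_word D A s1 Ql) Qr = 0) by (apply (Rmult_integral_contrapositive_currified _ _ C) || nra).
    pose proof (IHe2 H2 _ Qr (El_PSD D d A s1 Ql HPl) HPr Z2 s2) as T2. rewrite Ptilde_app in T2.
    rewrite Rmult_assoc, T2. ring.
  - destruct HC as [H1 H2]. rewrite ZR_alt in HZ. pose proof (ZR_nonneg D d A e1 Ql Qr H1 HPl HPr).
    pose proof (ZR_nonneg D d A e2 Ql Qr H2 HPl HPr). cbn [count].
    rewrite Rmult_plus_distr_r, IHe1, IHe2; auto; lra.
  - assert (forall m (s : word d), (length s < m)%nat -> forall Ql Qr, PSD D Ql -> PSD D Qr ->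
      ZR D A (Star e) Ql Qr = 0 -> count (Star e) s * Ptilde D A s Ql Qr = 0); [|eauto].
    pose proof (count_inner_zero D d A e HD HC) as Z0. pose proof HC as HC'. destruct HC' as [H1 _].
    induction m; intros s0 Hs Ql' Qr' HPl' HPr' HZ'. lia.
    rewrite ZR_star in HZ' by auto.
    pose proof (tr_psd' D Ql' Qr' HPl' HPr'). pose proof (ZR_nonneg D d A (Cat e (Star e)) Ql' Qr' (conj H1 HC) HPl' HPr').
    rewrite (count_star_eq D d A) by auto. rewrite Rmult_plus_distr_r, isnil_P.
    assert (Z1 : ZR D A (Cat e (Star e)) Ql' Qr' = 0) by lra.
    assert (T0 : mtrace D (mmul D Ql' Qr') = 0) by lra. rewrite T0.
    cbn [count]. rewrite <- lsum_scal_r. rewrite lsum_zero. ring.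
    intros [s1 s2] Hp. destruct (splits_in s0 (s1,s2) Hp) as [E [Hl _]]. simpl in *. rewrite <- E.
    pose proof (IHe H1 Ql' (Er D A (Star e) Qr') HPl' (Er_PSD D d A (Star e) HC Qr' HPr') Z1 s1) as T1.
    rewrite P_Z in T1. destruct (Req_dec (count e s1) 0) as [C|C]. rewrite C; ring.
    assert (Z2 : ZR D A (Star e) (El_word D A s1 Ql') Qr' = 0) by nra.
    destruct Hl as [Hl|Hl]. subst s1. contradiction.
    pose proof (IHm s2 ltac:(lia) _ Qr' (El_PSD D d A s1 Ql' HPl') HPr' Z2) as T2. rewrite Ptilde_app in T2.
    rewrite Rmult_assoc, T2. ring.
Qed.


Lemma wdiv Z Zi x : 0 < Z -> (Zi = 0 -> x = 0) -> Zi / Z * (x / Zi) = x / Z.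
Proof. intros HZ H. destruct (Req_dec Zi 0) as [E|E]. rewrite E, H by auto. unfold Rdiv; ring. field; split; lra. Qed.

Lemma cat_V_eq D d (A : Fin.t d -> Mat) e1 e2 Ql Qr s : (0 < D)%nat -> Conv D A (Cat e1 e2) -> PSD D Ql -> PSD D Qr ->
  0 < ZR D A (Cat e1 e2) Ql Qr ->
  V D A (Cat e1 e2) Ql Qr s = lsum (fun p => V D A e1 Ql (Er D A e2 Qr) (fst p) * V D A e2 (El_word D A (fst p) Ql) Qr (snd p)) (splits s).
Proof. intros HD [H1 H2] HPl HPr HZ. unfold V at 1. cbn [count].
  unfold Rdiv. rewrite Rmult_assoc. rewrite <- lsum_scal_r. apply lsum_ext_in. intros [s1 s2] Hp.
  destruct (splits_in s (s1,s2) Hp) as [E _]. simpl in *. rewrite <- E. unfold V. rewrite P_Z.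
  rewrite <- ZR_cat. destruct (Req_dec (ZR D A e2 (El_word D A s1 Ql) Qr) 0) as [Z|Z].
  - pose proof (supp D d A e2 HD H2 _ Qr (El_PSD D d A s1 Ql HPl) HPr Z s2) as S2. rewrite Ptilde_app in S2.
    rewrite Z. transitivity (count e1 s1 * (count e2 s2 * Ptilde D A (s1 ++ s2) Ql Qr) * / ZR D A (Cat e1 e2) Ql Qr). ring.
    rewrite S2. unfold Rdiv. rewrite Rinv_0. ring.
  - rewrite <- Ptilde_app. field. split; lra. Qed.

Lemma alt_V_eq D d (A : Fin.t d -> Mat) e1 e2 Ql Qr s : (0 < D)%nat -> Conv D A (Alt e1 e2) -> PSD D Ql -> PSD D Qr ->
  0 < ZR D A (Alt e1 e2) Ql Qr ->
  V D A (Alt e1 e2) Ql Qr s = ZR D A e1 Ql Qr / ZR D A (Alt e1 e2) Ql Qr * V D A e1 Ql Qr s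
                             + ZR D A e2 Ql Qr / ZR D A (Alt e1 e2) Ql Qr * V D A e2 Ql Qr s.
Proof. intros HD [H1 H2] HPl HPr HZ. unfold V.
  rewrite (wdiv _ (ZR D A e1 Ql Qr) _ HZ (fun Z => supp D d A e1 HD H1 Ql Qr HPl HPr Z s)).
  rewrite (wdiv _ (ZR D A e2 Ql Qr) _ HZ (fun Z => supp D d A e2 HD H2 Ql Qr HPl HPr Z s)).
  cbn [count]. unfold Rdiv; ring. Qed.

Lemma star_V_eq D d (A : Fin.t d -> Mat) e1 Ql Qr s : (0 < D)%nat -> Conv D A (Star e1) -> PSD D Ql -> PSD D Qr ->
  0 < ZR D A (Star e1) Ql Qr ->
  V D A (Star e1) Ql Qr s = isnil s * (mtrace D (mmul D Ql Qr) / ZR D A (Star e1) Ql Qr)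
     + ZR D A (Cat e1 (Star e1)) Ql Qr / ZR D A (Star e1) Ql Qr * V D A (Cat e1 (Star e1)) Ql Qr s.
Proof. intros HD HC HPl HPr HZ. unfold V at 2.
  assert (HC2 : Conv D A (Cat e1 (Star e1))) by (split; [apply HC|auto]).
  rewrite (wdiv _ _ _ HZ (fun Z => supp D d A _ HD HC2 Ql Qr HPl HPr Z s)).
  unfold V. rewrite (count_star_eq D d A) by auto. unfold Rdiv.
  rewrite Rmult_plus_distr_r, isnil_P. ring. Qed.

Lemma step_term a x b y : 0 <= a <= x -> (x = 0 \/ 0 <= b <= y) -> 0 <= a * b <= x * y.
Proof. intros Ha [E|Hb]. subst. assert (a = 0) by lra. subst. lra. split; nra. Qed.

Lemma alt_term Zi Z p x : 0 <= Zi -> 0 < Z -> 0 <= x -> (0 < Zi -> 0 <= p <= x / Zi) ->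
  0 <= Zi / Z * p <= x / Z.
Proof. intros H0 HZ Hx H. destruct (Req_dec Zi 0) as [E|E]. rewrite E. unfold Rdiv.
  rewrite Rmult_0_l, Rmult_0_l. split; [lra|]. apply Rmult_le_pos; auto. left; apply Rinv_0_lt_compat; auto.
  destruct (H ltac:(lra)) as [Hp1 Hp2]. split. apply Rmult_le_pos; auto. unfold Rdiv; apply Rmult_le_pos; auto. left; apply Rinv_0_lt_compat; auto.
  apply Rle_trans with (Zi / Z * (x / Zi)). apply Rmult_le_compat_l; auto. unfold Rdiv; apply Rmult_le_pos; auto. left; apply Rinv_0_lt_compat; auto.
  right; field; lra. Qed.

Lemma wterm Zi Z p v : 0 <= Zi -> 0 < Z -> (0 < Zi -> 0 <= p <= v) -> 0 <= Zi / Z * p <= Zi / Z * v.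
Proof. intros H0 HZ H. destruct (Req_dec Zi 0) as [E|E]. rewrite E. unfold Rdiv. lra.
  destruct (H ltac:(lra)). assert (0 <= Zi / Z) by (unfold Rdiv; apply Rmult_le_pos; auto; left; apply Rinv_0_lt_compat; auto).
  split. apply Rmult_le_pos; auto. apply Rmult_le_compat_l; auto. Qed.

Lemma Reach_cat1 D d (A : Fin.t d -> Mat) e1 e2 Ql Qr : Reach D A (Cat e1 e2, Ql, Qr) -> Reach D A (e1, Ql, Er D A e2 Qr).
Proof. intros H; eapply reach_step; eauto; constructor. Qed.
Lemma Reach_cat2 D d (A : Fin.t d -> Mat) e1 e2 Ql Qr s1 : Reach D A (Cat e1 e2, Ql, Qr) -> count e1 s1 <> 0 -> Reach D A (e2, El_word D A s1 Ql, Qr).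
Proof. intros H C; eapply reach_step; eauto; constructor; auto. Qed.
Lemma Reach_alt1 D d (A : Fin.t d -> Mat) e1 e2 Ql Qr : Reach D A (Alt e1 e2, Ql, Qr) -> Reach D A (e1, Ql, Qr).
Proof. intros H; eapply reach_step; eauto; constructor. Qed.
Lemma Reach_alt2 D d (A : Fin.t d -> Mat) e1 e2 Ql Qr : Reach D A (Alt e1 e2, Ql, Qr) -> Reach D A (e2, Ql, Qr).
Proof. intros H; eapply reach_step; eauto; constructor. Qed.
Lemma Reach_star D d (A : Fin.t d -> Mat) e1 Ql Qr : Reach D A (Star e1, Ql, Qr) -> Reach D A (Cat e1 (Star e1), Ql, Qr).
Proof. intros H; eapply reach_step; eauto; constructor. Qed.

Lemma chr_val D d (A : Fin.t d -> Mat) c Ql Qr s : 0 < ZR D A (Chr c) Ql Qr -> is_single c s = V D A (Chr c) Ql Qr s.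
Proof. intros HZ. unfold V. cbn [count]. unfold is_single. destruct s as [|c' [|c'' s']]; try (unfold Rdiv; ring).
  destruct (Fin.eq_dec c c'). subst. rewrite Ptilde_chr. field. lra. unfold Rdiv; ring. Qed.

Lemma UB D d (A : Fin.t d -> Mat) : (0 < D)%nat -> forall n e Ql Qr s, Conv D A e -> PSD D Ql -> PSD D Qr ->
  0 < ZR D A e Ql Qr -> Reach D A (e, Ql, Qr) -> 0 <= psamp D A n e Ql Qr s <= V D A e Ql Qr s.
Proof. intros HD n. induction n; intros e Ql Qr s HC HPl HPr HZ HR.
  - simpl. split; [lra|]. apply V_nonneg; auto.
  - destruct e as [c|e1 e2|e1 e2|e1].
    + cbn [psamp]. rewrite <- chr_val by auto. unfold is_single. destruct s as [|c' [|]]; try lra.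
      destruct (Fin.eq_dec c c'); lra.
    + cbn [psamp]. rewrite cat_V_eq by auto. destruct HC as [H1 H2]. split.
      * apply lsum_nonneg. intros [s1 s2] Hp. simpl.
        destruct (IHn e1 Ql (Er D A e2 Qr) s1 H1 HPl (Er_PSD D d A e2 H2 Qr HPr) HZ (Reach_cat1 D d A _ _ _ _ HR)) as [a1 _].
        destruct (Req_dec (count e1 s1) 0) as [C|C].
        { assert (V D A e1 Ql (Er D A e2 Qr) s1 = 0) by (unfold V; rewrite C; unfold Rdiv; ring).
          destruct (IHn e1 Ql (Er D A e2 Qr) s1 H1 HPl (Er_PSD D d A e2 H2 Qr HPr) HZ (Reach_cat1 D d A _ _ _ _ HR)) as [_ a2].
          assert (psamp D A n e1 Ql (Er D A e2 Qr) s1 = 0) by lra. rewrite H0. lra. }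
        destruct (Req_dec (ZR D A e2 (El_word D A s1 Ql) Qr) 0) as [Z|Z].
        { assert (V D A e1 Ql (Er D A e2 Qr) s1 = 0) by (unfold V; rewrite P_Z, Z; unfold Rdiv; ring).
          destruct (IHn e1 Ql (Er D A e2 Qr) s1 H1 HPl (Er_PSD D d A e2 H2 Qr HPr) HZ (Reach_cat1 D d A _ _ _ _ HR)) as [_ a2].
          assert (psamp D A n e1 Ql (Er D A e2 Qr) s1 = 0) by lra. rewrite H0. lra. }
        pose proof (ZR_nonneg D d A e2 _ Qr H2 (El_PSD D d A s1 Ql HPl) HPr).
        destruct (IHn e2 _ Qr s2 H2 (El_PSD D d A s1 Ql HPl) HPr ltac:(lra) (Reach_cat2 D d A _ _ _ _ _ HR C)).
        apply Rmult_le_pos; auto.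
      * apply lsum_le. intros [s1 s2] Hp. simpl.
        pose proof (IHn e1 Ql (Er D A e2 Qr) s1 H1 HPl (Er_PSD D d A e2 H2 Qr HPr) HZ (Reach_cat1 D d A _ _ _ _ HR)) as Ha.
        apply step_term; auto.
        destruct (Req_dec (count e1 s1) 0) as [C|C].
        { left. unfold V; rewrite C; unfold Rdiv; ring. }
        destruct (Req_dec (ZR D A e2 (El_word D A s1 Ql) Qr) 0) as [Z|Z].
        { left. unfold V; rewrite P_Z, Z; unfold Rdiv; ring. }
        pose proof (ZR_nonneg D d A e2 _ Qr H2 (El_PSD D d A s1 Ql HPl) HPr).
        right. apply IHn; auto. apply El_PSD; auto. lra. apply (Reach_cat2 D d A e1 e2); auto.
    + cbn [psamp]. rewrite alt_V_eq by auto. destruct HC as [H1 H2].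
      pose proof (ZR_nonneg D d A e1 Ql Qr H1 HPl HPr). pose proof (ZR_nonneg D d A e2 Ql Qr H2 HPl HPr).
      assert (T1 : 0 <= ZR D A e1 Ql Qr / ZR D A (Alt e1 e2) Ql Qr * psamp D A n e1 Ql Qr s <=
                   ZR D A e1 Ql Qr / ZR D A (Alt e1 e2) Ql Qr * V D A e1 Ql Qr s).
      { apply wterm; auto. intros. apply IHn; auto. eapply Reach_alt1; eauto. }
      assert (T2 : 0 <= ZR D A e2 Ql Qr / ZR D A (Alt e1 e2) Ql Qr * psamp D A n e2 Ql Qr s <=
                   ZR D A e2 Ql Qr / ZR D A (Alt e1 e2) Ql Qr * V D A e2 Ql Qr s).
      { apply wterm; auto. intros. apply IHn; auto. eapply Reach_alt2; eauto. }
      lra.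
    + cbn [psamp]. cbv zeta. rewrite star_V_eq by auto.
      assert (M : (match s with [] => mtrace D (mmul D Ql Qr) / ZR D A (Star e1) Ql Qr | _ :: _ => 0 end) =
                  isnil s * (mtrace D (mmul D Ql Qr) / ZR D A (Star e1) Ql Qr)) by (destruct s; simpl; ring).
      rewrite M. rewrite ZR_star by auto.
      pose proof (tr_psd' D Ql Qr HPl HPr) as HT.
      assert (HC2 : Conv D A (Cat e1 (Star e1))) by (split; [apply HC|auto]).
      pose proof (ZR_nonneg D d A _ Ql Qr HC2 HPl HPr) as HZ1.
      rewrite ZR_star in HZ by auto.
      replace (1 - mtrace D (mmul D Ql Qr) / (mtrace D (mmul D Ql Qr) + ZR D A (Cat e1 (Star e1)) Ql Qr))
        with (ZR D A (Cat e1 (Star e1)) Ql Qr / (mtrace D (mmul D Ql Qr) + ZR D A (Cat e1 (Star e1)) Ql Qr)) by (field; lra).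
      assert (T1 : 0 <= ZR D A (Cat e1 (Star e1)) Ql Qr / (mtrace D (mmul D Ql Qr) + ZR D A (Cat e1 (Star e1)) Ql Qr) * psamp D A n (Cat e1 (Star e1)) Ql Qr s <=
                   ZR D A (Cat e1 (Star e1)) Ql Qr / (mtrace D (mmul D Ql Qr) + ZR D A (Cat e1 (Star e1)) Ql Qr) * V D A (Cat e1 (Star e1)) Ql Qr s).
      { apply wterm; auto. intros. apply IHn; auto. apply Reach_star; auto. }
      assert (0 <= isnil s * (mtrace D (mmul D Ql Qr) / (mtrace D (mmul D Ql Qr) + ZR D A (Cat e1 (Star e1)) Ql Qr))).
      { apply Rmult_le_pos. destruct s; simpl; lra. unfold Rdiv; apply Rmult_le_pos; auto. left; apply Rinv_0_lt_compat; auto. }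
      lra.
Qed.


Lemma cv_prod (a b : nat -> R) x y : (forall n, 0 <= a n <= x) -> (x = 0 \/ (Un_cv a x /\ Un_cv b y)) ->
  Un_cv (fun n => a n * b n) (x * y).
Proof. intros H [E|[Ha Hb]]. subst. apply (cv_ext (fun _ => 0 * y)). intros n. specialize (H n).
  assert (a n = 0) by lra. rewrite H0; ring. apply cv_const. apply CV_mult; auto. Qed.

Lemma wcv (p : nat -> R) Zi Z v : (Zi <> 0 -> Un_cv p v) -> Un_cv (fun n => Zi / Z * p n) (Zi / Z * v).
Proof. intros H. destruct (Req_dec Zi 0) as [E|E]. rewrite E. apply (cv_ext (fun _ => 0 / Z * v)).
  intros; unfold Rdiv; ring. apply cv_const. apply cv_scal; auto. Qed.

Lemma LIM D d (A : Fin.t d -> Mat) : (0 < D)%nat -> forall e, Conv D A e -> forall Ql Qr s, PSD D Ql -> PSD D Qr ->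
  0 < ZR D A e Ql Qr -> Reach D A (e, Ql, Qr) -> Un_cv (fun n => psamp D A n e Ql Qr s) (V D A e Ql Qr s).
Proof. intros HD e. induction e as [c|e1 IHe1 e2 IHe2|e1 IHe1 e2 IHe2|e1 IHe1]; intros HC Ql Qr s HPl HPr HZ HR.
  - apply cv_shift. apply cv_ev. exists 0%nat. intros. cbn [psamp]. apply chr_val; auto.
  - apply cv_shift. rewrite cat_V_eq by auto. destruct HC as [H1 H2].
    apply (cv_ext (fun n => lsum (fun p => psamp D A n e1 Ql (Er D A e2 Qr) (fst p) * psamp D A n e2 (El_word D A (fst p) Ql) Qr (snd p)) (splits s))).
    intros; reflexivity.
    apply cv_lsum. intros [s1 s2] Hp. cbn [fst snd]. apply cv_prod.
    + intros n. apply (UB D d A); auto. apply Er_PSD; auto. apply Reach_cat1; auto.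
    + destruct (Req_dec (count e1 s1) 0) as [C|C].
      { left. unfold V; rewrite C; unfold Rdiv; ring. }
      destruct (Req_dec (ZR D A e2 (El_word D A s1 Ql) Qr) 0) as [Z|Z].
      { left. unfold V; rewrite P_Z, Z; unfold Rdiv; ring. }
      pose proof (ZR_nonneg D d A e2 _ Qr H2 (El_PSD D d A s1 Ql HPl) HPr).
      right. split. apply IHe1; auto. apply Er_PSD; auto. apply Reach_cat1; auto.
      apply IHe2; auto. apply El_PSD; auto. lra. apply (Reach_cat2 D d A e1 e2); auto.
  - apply cv_shift. rewrite alt_V_eq by auto. destruct HC as [H1 H2].
    pose proof (ZR_nonneg D d A e1 Ql Qr H1 HPl HPr). pose proof (ZR_nonneg D d A e2 Ql Qr H2 HPl HPr).
    apply CV_plus; apply wcv; intros.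
    + apply IHe1; auto. lra. eapply Reach_alt1; eauto.
    + apply IHe2; auto. lra. eapply Reach_alt2; eauto.
  - pose proof (count_inner_zero D d A e1 HD HC) as Z0. pose proof HC as HC'. destruct HC' as [H1 _].
    assert (HC2 : Conv D A (Cat e1 (Star e1))) by (split; auto).
    assert (forall m (s : word d), (length s < m)%nat -> forall Ql Qr, PSD D Ql -> PSD D Qr ->
      0 < ZR D A (Star e1) Ql Qr -> Reach D A (Star e1, Ql, Qr) ->
      Un_cv (fun n => psamp D A n (Star e1) Ql Qr s) (V D A (Star e1) Ql Qr s)); [|eauto].
    clear Ql Qr s HPl HPr HZ HR.
    induction m; intros s Hs Ql Qr HPl HPr HZ HR. lia.
    apply cv_shift. apply (cv_shift (fun n => psamp D A (S n) (Star e1) Ql Qr s)).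
    rewrite star_V_eq by auto.
    pose proof (ZR_star D d A e1 Ql Qr HC) as EZ.
    pose proof (tr_psd' D Ql Qr HPl HPr) as HT.
    pose proof (ZR_nonneg D d A _ Ql Qr HC2 HPl HPr) as HZ1.
    set (Z := ZR D A (Star e1) Ql Qr) in *. set (T := mtrace D (mmul D Ql Qr)) in *.
    set (Z1 := ZR D A (Cat e1 (Star e1)) Ql Qr) in *.
    apply (cv_ext (fun n => isnil s * (T / Z) + Z1 / Z *
       lsum (fun p => psamp D A n e1 Ql (Er D A (Star e1) Qr) (fst p) * psamp D A n (Star e1) (El_word D A (fst p) Ql) Qr (snd p)) (splits s))).
    { intros n. cbn [psamp]. cbv zeta. fold Z T. f_equal. destruct s; simpl; ring.
      f_equal. rewrite EZ. field. rewrite <- EZ. lra. }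
    apply CV_plus. apply cv_const. apply wcv. intros NZ.
    rewrite cat_V_eq; auto. 2:{ fold Z1. lra. }
    apply cv_lsum. intros [s1 s2] Hp. cbn [fst snd]. apply cv_prod.
    + intros n. apply (UB D d A); auto. apply Er_PSD; auto. change (0 < Z1); lra. apply Reach_cat1, Reach_star; auto.
    + destruct (Req_dec (count e1 s1) 0) as [C|C].
      { left. unfold V; rewrite C; unfold Rdiv; ring. }
      destruct (Req_dec (ZR D A (Star e1) (El_word D A s1 Ql) Qr) 0) as [Zs|Zs].
      { left. unfold V; rewrite P_Z, Zs; unfold Rdiv; ring. }
      pose proof (ZR_nonneg D d A (Star e1) _ Qr HC (El_PSD D d A s1 Ql HPl) HPr).
      destruct (splits_in s (s1,s2) Hp) as [_ [[E|E] _]]; simpl in E. subst s1. contradiction.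
      right. split. apply IHe1; auto. apply Er_PSD; auto. change (0 < Z1); lra. apply Reach_cat1, Reach_star; auto.
      apply IHm; auto. lia. apply El_PSD; auto. lra. apply (Reach_cat2 D d A e1 (Star e1)); auto. apply Reach_star; auto.
Qed.

Theorem lemma1 (D d : nat) (A : Fin.t d -> Mat) (e : regex d) (Ql Qr : Mat) :
  Conv D A e ->
  PSD D Ql -> PSD D Qr ->
  0 < ZR D A e Ql Qr ->
  (forall c : call d, clos_refl_trans (call d) (step D A) (e, Ql, Qr) c ->
     norm_pos D A c) ->
  forall s : word d,
    Un_cv (fun n => psamp D A n e Ql Qr s)
          (count e s * Ptilde D A s Ql Qr / ZR D A e Ql Qr).
Proof. intros HC HPl HPr HZ HR s.
  assert (HD : (0 < D)%nat). { destruct D. unfold ZR, mtrace in HZ. simpl in HZ. lra. lia. }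
  apply (LIM D d A HD e HC Ql Qr s HPl HPr HZ HR). Qed.
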